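(* There exists an absolute constant $c>0$ such that every $3$-graph $\mathcal{T}$ on five vertices with at most eight edges satisfies $\lambda(\mathcal{T})<2/27-c$.
   Context: For a $3$-graph $\mathcal{T}$ on $[s]$, $p_{\mathcal{T}}(x)=\sum_{E\in\mathcal{T}}\prod_{i\in E}x_i$ and the Lagrangian is $\lambda(\mathcal{T})=\max\{p_{\mathcal{T}}(x): x\in\mathbb{R}^s,\ x_i\ge0,\ \sum_i x_i=1\}$. *)

(* Defs.v *)
From mathcomp Require Import all_boot all_order all_algebra.
From mathcomp Require Import all_classical all_reals.
Set Implicit Arguments. Unset Strict Implicit. Unset Printing Implicit Defensive.
Import Order.TTheory GRing.Theory Num.Theory.
Local Open Scope ring_scope.
Local Open Scope classical_set_scope.

Definition is_3graph (s : nat) (T : {set {set 'I_s}}) : bool :=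
  [forall E in T, #|E| == 3%N].

Definition lagr_poly (R : realType) (s : nat) (T : {set {set 'I_s}})
  (x : 'I_s -> R) : R :=
  \sum_(E in T) \prod_(i in E) x i.

Definition std_simplex (R : realType) (s : nat) : set ('I_s -> R) :=
  [set x | (forall i, 0 <= x i) /\ \sum_(i < s) x i = 1].

(* Lagrangian: max (= sup, attained by compactness) of p_T over the simplex *)
Definition lagrangian (R : realType) (s : nat) (T : {set {set 'I_s}}) : R :=
  sup [set lagr_poly T x | x in @std_simplex R s].

(* Main.v *)
Require Import Defs.
From mathcomp Require Import all_boot all_order all_algebra.
From mathcomp Require Import all_classical all_reals.
From mathcomp Require Import lra zify.
From Stdlib Require Import Lia.
Import Order.TTheory GRing.Theory Num.Theory.
Local Open Scope ring_scope.

Lemma poly_bound (R : realType) (a b c d e : R) :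
  0 <= a -> 0 <= b -> 0 <= c -> 0 <= d -> 0 <= e -> a + b + c + d + e = 1 ->
  (a*b + a*c + b*c) * (d + e) + (a + b + c) * (d * e) <= 147 / 2000.
Proof.
move=> ha hb hc hd he hs.
have h1 : a*b + a*c + b*c <= (a+b+c)^+2/3.
  have := sqr_ge0 (a - b); have := sqr_ge0 (b - c); have := sqr_ge0 (c - a). nra.
have h2 : d * e <= (d+e)^+2/4 by have := sqr_ge0 (d - e); nra.
have hu : 0 <= a + b + c by lra.
have hv : 0 <= d + e by lra.
have h3 : (a*b + a*c + b*c) * (d + e) <= (a+b+c)^+2/3 * (d+e) by exact: ler_wpM2r.
have h4 : (a + b + c) * (d * e) <= (a+b+c) * ((d+e)^+2/4) by exact: ler_wpM2l.
suff : (a+b+c)^+2/3 * (d+e) + (a+b+c) * ((d+e)^+2/4) <= 147/2000 by lra.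
have -> : d + e = 1 - (a+b+c) by lra.
move: hu; have : a + b + c <= 1 by lra.
move: (a+b+c) => u u1 u0.
have := mulr_ge0 u0 (sqr_ge0 (u - 107/200)).
have := sqr_ge0 (u - 107/200).
nra.
Qed.

Definition h5 (d : 'I_5 * 'I_5 * 'I_5) : {set 'I_5} := [set d.1.1; d.1.2; d.2].
Definition D5 (d : 'I_5 * 'I_5 * 'I_5) : bool := (d.1.1 < d.1.2)%N && (d.1.2 < d.2)%N.

Lemma sort3 (x y z : 'I_5) : x != y -> y != z -> z != x ->
  exists d, D5 d && (h5 d == [set x; y; z]).
Proof.
move=> xy yz zx.
have nv : forall u v : 'I_5, u != v -> nat_of_ord u <> nat_of_ord v.
  by move=> u v /eqP uv /val_inj.
have := nv _ _ xy; have := nv _ _ yz; have := nv _ _ zx.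
move=> {}zx {}yz {}xy.
have E : forall a b c : 'I_5, (a < b)%N -> (b < c)%N -> [set a; b; c] = [set x; y; z] ->
   exists d, D5 d && (h5 d == [set x; y; z]).
  by move=> a b c ab bc e; exists ((a, b), c); rewrite /D5 /h5 /= ab bc e eqxx.
have [xy'|yx'|xy'] := ltngtP x y; have [yz'|zy'|yz'] := ltngtP y z;
  have [xz'|zx'|xz'] := ltngtP x z;
  try (by exfalso; lia);
  first [ apply: (E x y z); [lia|lia|] | apply: (E x z y); [lia|lia|]
        | apply: (E z x y); [lia|lia|] | apply: (E y x z); [lia|lia|]
        | apply: (E y z x); [lia|lia|] | apply: (E z y x); [lia|lia|] ];
  apply/setP => l; rewrite !inE;
  by case: (l == x); case: (l == y); case: (l == z).
Qed.

Lemma h5_exists (E : {set 'I_5}) : #|E| = 3%N -> exists d, D5 d && (h5 d == E).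
Proof.
move=> HE.
have /card_gt2P [x [y [z [[xE yE zE] [xy yz zx]]]]] : (2 < #|E|)%N by rewrite HE.
have -> : E = [set x; y; z].
  apply/esym/eqP; rewrite eqEcard; apply/andP; split.
    apply/fintype.subsetP => l; rewrite !inE => H.
    case: (eqVneq l x) => [->//|nx]; case: (eqVneq l y) => [->//|ny].
    by move: H; rewrite (negbTE nx) (negbTE ny) /= => /eqP ->.
  rewrite HE; apply/card_gt2P; exists x, y, z; split; last by [].
  by rewrite !inE !eqxx /= ?orbT.
exact: sort3.
Qed.

Lemma D5_neq (d : 'I_5 * 'I_5 * 'I_5) : D5 d ->
  [/\ d.1.1 != d.1.2, d.1.2 != d.2 & d.2 != d.1.1].
Proof.
case: d => [[i j] k]; rewrite /D5 /= => /andP [ij jk].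
split; apply/eqP => e; move: ij jk; rewrite e; lia.
Qed.

Lemma prod3 (R : realType) (x : 'I_5 -> R) (i j k : 'I_5) :
  i != j -> j != k -> k != i -> \prod_(l in [set i; j; k]) x l = x i * x j * x k.
Proof.
move=> ij jk ki.
have -> : [set i; j; k] = i |: (j |: [set k]).
  by apply/setP => l; rewrite !inE orbA.
rewrite big_setU1 /=; last by rewrite !inE negb_or ij eq_sym ki.
rewrite big_setU1 /=; last by rewrite !inE jk.
by rewrite big_set1 mulrA.
Qed.

Definition G5 {R : realType} (y : nat -> R) (d : 'I_5 * 'I_5 * 'I_5) : R :=
  y d.1.1 * y d.1.2 * y d.2.

Lemma expand5 (R : realType) (y : nat -> R) : \sum_(d | D5 d) G5 y d =
  y 0%N * y 1%N * y 2%N + y 0%N * y 1%N * y 3%N + y 0%N * y 1%N * y 4%N + y 0%N * y 2%N * y 3%N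
  + y 0%N * y 2%N * y 4%N + y 0%N * y 3%N * y 4%N + y 1%N * y 2%N * y 3%N + y 1%N * y 2%N * y 4%N
  + y 1%N * y 3%N * y 4%N + y 2%N * y 3%N * y 4%N.
Proof.
rewrite big_mkcond.
transitivity (\sum_(i < 5) \sum_(j < 5) \sum_(k < 5)
   (if D5 ((i, j), k) then G5 y ((i, j), k) else 0)).
  by rewrite pair_bigA pair_bigA; apply: eq_bigr => -[[i j] k].
rewrite !big_ord_recl !big_ord0 /= /bump /= /G5 /=.
lra.
Qed.

Ltac pb y y0 a b c d e :=
  have := @poly_bound _ (y a) (y b) (y c) (y d) (y e) (y0 a) (y0 b) (y0 c) (y0 d) (y0 e) ltac:(lra); lra.

Lemma key (R : realType) (T : {set {set 'I_5}}) (t : {set 'I_5}) (x : 'I_5 -> R) :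
  is_3graph T -> #|t| = 3%N -> t \notin T -> (forall i, 0 <= x i) -> \sum_(i < 5) x i = 1 ->
  lagr_poly T x <= 147/2000.
Proof.
move=> /forallP HT t3 tT x0 xs.
have F0 : forall E : {set 'I_5}, 0 <= \prod_(i in E) x i.
  by move=> E; apply: prodr_ge0 => i _.
have step1 : lagr_poly T x <= \sum_(E : {set 'I_5} | (#|E| == 3%N) && (E != t)) \prod_(i in E) x i.
  rewrite /lagr_poly big_mkcond [X in _ <= X]big_mkcond /=; apply: ler_sum => E _.
  case: ifP => ET.
    have := HT E; rewrite ET /= => ->.
    have -> : E != t by apply: contraNneq tT => <-.
    by [].
  by case: ifP.
have step2 : \sum_(E : {set 'I_5} | (#|E| == 3%N) && (E != t)) \prod_(i in E) x i <=
   \sum_(d | D5 d && (h5 d != t)) \prod_(i in h5 d) x i.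
  rewrite (partition_big h5 (fun E => E != t)); last by move=> d /andP [].
  rewrite big_mkcond [X in _ <= X]big_mkcond /=; apply: ler_sum => E _.
  case: (boolP ((#|E| == 3%N) && (E != t))) => [/andP [E3 Et] | _].
    rewrite Et. have [d0 /andP [Dd0 /eqP hd0]] := h5_exists _ (eqP E3).
    rewrite (bigD1 d0) /=; last by rewrite Dd0 hd0 Et eqxx.
    rewrite hd0 lerDl; apply: sumr_ge0 => d _; exact: F0.
  by case: ifP => _ //; apply: sumr_ge0 => *; exact: F0.
have [dt /andP [Ddt /eqP hdt]] := h5_exists _ t3.
pose y : nat -> R := fun n => x (inord n).
have xy : forall i : 'I_5, x i = y i by move=> i; rewrite /y inord_val.
have y0 : forall n, 0 <= y n by move=> n; exact: x0.
have step3 : \sum_(d | D5 d && (h5 d != t)) \prod_(i in h5 d) x i <=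
    \sum_(d | D5 d && (d != dt)) G5 y d.
  rewrite big_mkcond [X in _ <= X]big_mkcond /=; apply: ler_sum => d _.
  case: (boolP (D5 d && (h5 d != t))) => [/andP [Dd hd] | _].
    have -> : d != dt by apply: contraNneq hd => ->; rewrite hdt.
    rewrite Dd /=. have [n1 n2 n3] := D5_neq _ Dd.
    by rewrite /h5 prod3 // /G5 !xy.
  by case: ifP => _ //; rewrite /G5; apply: mulr_ge0; [apply: mulr_ge0|].
have step4 : \sum_(d | D5 d) G5 y d = G5 y dt + \sum_(d | D5 d && (d != dt)) G5 y d.
  exact: bigD1.
rewrite expand5 in step4.
have ys : y 0%N + y 1%N + y 2%N + y 3%N + y 4%N = 1.
  rewrite -xs !big_ord_recl big_ord0 !xy /= /bump /=; lra.
have fin : lagr_poly T x <= y 0%N * y 1%N * y 2%N + y 0%N * y 1%N * y 3%N + y 0%N * y 1%N * y 4%N + y 0%N * y 2%N * y 3%N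
  + y 0%N * y 2%N * y 4%N + y 0%N * y 3%N * y 4%N + y 1%N * y 2%N * y 3%N + y 1%N * y 2%N * y 4%N
  + y 1%N * y 3%N * y 4%N + y 2%N * y 3%N * y 4%N - G5 y dt by lra.
move: fin Ddt; clear step1 step2 step3 step4.
case: dt {hdt} => [[a b] c]; rewrite /D5 /G5 /=.
move: (ltn_ord a) (ltn_ord b) (ltn_ord c); move: (nat_of_ord a) (nat_of_ord b) (nat_of_ord c) => na nb nc.
case: na => [|[|[|[|[|na]]]]]; case: nb => [|[|[|[|[|nb]]]]]; case: nc => [|[|[|[|[|nc]]]]] //= _ _ _ fin _;
first [ pb y y0 0%N 1%N 2%N 3%N 4%N | pb y y0 0%N 1%N 3%N 2%N 4%N | pb y y0 0%N 1%N 4%N 2%N 3%N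
      | pb y y0 0%N 2%N 3%N 1%N 4%N | pb y y0 0%N 2%N 4%N 1%N 3%N | pb y y0 0%N 3%N 4%N 1%N 2%N
      | pb y y0 1%N 2%N 3%N 0%N 4%N | pb y y0 1%N 2%N 4%N 0%N 3%N | pb y y0 1%N 3%N 4%N 0%N 2%N
      | pb y y0 2%N 3%N 4%N 0%N 1%N ].
Qed.

Theorem lemma4p3 (R : realType) :
  exists c : R, 0 < c /\
    forall T : {set {set 'I_5}}, @is_3graph 5 T -> (#|T| <= 8)%N ->
      @lagrangian R 5 T < 2 / 27 - c.
Proof.
exists (1/2000); split; first lra.
move=> T HT T8.
have : ~~ ([set E : {set 'I_5} | #|E| == 3%N] \subset T).
  apply/negP => sub; have := subset_leq_card sub.
  rewrite card_draws card_ord => h.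
  by have := leq_trans h T8.
case/fintype.subsetPn => t tK tT.
have t3 : #|t| = 3%N by move: tK; rewrite inE => /eqP.
have le : lagrangian R T <= 147/2000.
  rewrite /lagrangian; apply: ge_sup.
    exists (lagr_poly T (fun=> 1/5 : R)); exists (fun=> 1/5 : R) => //; split.
      by move=> i; lra.
    by rewrite sumr_const card_ord -mulr_natr; lra.
  move=> z [w [w0 ws] <-]; exact: (@key R T t w HT t3 tT w0 ws).
lra.
Qed.
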